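(* Let $n\ge2$ be an integer, $l_k=\pi k/n$, $S_n=\sum_{k=1}^{n-1}\csc l_k$, $c_k=\cos\frac{\pi(2k-1)}{2n}$, $\sigma_k(\phi)=(1-c_k^2\cos^2\phi)^{1/2}$, $V(\phi)=\frac{S_n}{4\cos\phi}+\frac14\sum_{k=1}^n\frac{1}{\sigma_k(\phi)}$ and $W(\phi)=\cos\phi\,V(\phi)=\frac{S_n}{4}+\frac{\cos\phi}{4}\sum_{k=1}^n\frac1{\sigma_k(\phi)}$. Then (i) $W'(\phi)/W(\phi)\le0$ for all $\phi\in[0,\pi/2)$; (ii) if $n\ge10$, then $W(\pi/2)=S_n/4$ and $\left|W'(\phi)/W(\phi)\right|\le\frac45$ for all $\phi\in[\pi/4,\pi/2)$.
   Context: $V$ is the shape potential of the spatial double-polygon problem in Devaney-type coordinates; $W(\pi/2)$ denotes the value of the expression for $W$ at $\phi=\pi/2$. *)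

(* Defs.v *)
From Stdlib Require Import Reals.
From Coquelicot Require Import Coquelicot.
Open Scope R_scope.

Fixpoint rsum_up (m : nat) (f : nat -> R) : R :=
  match m with
  | O => 0
  | S m' => rsum_up m' f + f m
  end.
Definition sum1 (m : nat) (f : nat -> R) : R := rsum_up m f.

Definition l_ (n k : nat) : R := PI * INR k / INR n.
Definition S_ (n : nat) : R := sum1 (n - 1) (fun k => / sin (l_ n k)).
Definition c_ (n k : nat) : R := cos (PI * (2 * INR k - 1) / (2 * INR n)).
Definition sigma_ (n k : nat) (phi : R) : R :=
  sqrt (1 - (c_ n k)^2 * (cos phi)^2).
Definition V_ (n : nat) (phi : R) : R :=
  S_ n / (4 * cos phi) + / 4 * sum1 n (fun k => / sigma_ n k phi).
(* W(phi) = S_n/4 + cos(phi)/4 * sum_k 1/sigma_k(phi)  (= cos phi * V phi for cos phi <> 0) *)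
Definition W_ (n : nat) (phi : R) : R :=
  S_ n / 4 + cos phi / 4 * sum1 n (fun k => / sigma_ n k phi).

(* Main.v *)
Require Import Defs.
From Stdlib Require Import Reals Lra Lia Psatz.
From Coquelicot Require Import Coquelicot.
Open Scope R_scope.

Lemma rsum_ext m f g : (forall k, (1 <= k <= m)%nat -> f k = g k) -> rsum_up m f = rsum_up m g.
Proof. induction m; simpl; intros H; auto. rewrite IHm. rewrite H; auto; lia. intros; apply H; lia. Qed.

Lemma rsum_le m f g : (forall k, (1 <= k <= m)%nat -> f k <= g k) -> rsum_up m f <= rsum_up m g.
Proof. induction m; simpl; intros H; [lra|]. assert (H1 := H (S m) ltac:(lia)).
 assert (rsum_up m f <= rsum_up m g) by (apply IHm; intros; apply H; lia). lra. Qed.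

Lemma rsum_scal m a f : rsum_up m (fun k => a * f k) = a * rsum_up m f.
Proof. induction m; simpl; [ring|]. rewrite IHm; ring. Qed.

Lemma rsum_plus m f g : rsum_up m (fun k => f k + g k) = rsum_up m f + rsum_up m g.
Proof. induction m; simpl; [ring|]. rewrite IHm; ring. Qed.

Lemma rsum_const m a : rsum_up m (fun _ => a) = INR m * a.
Proof. induction m; simpl rsum_up; [simpl; ring|]. rewrite IHm, S_INR; ring. Qed.

Lemma rsum_shift m f : rsum_up (S m) f = f 1%nat + rsum_up m (fun k => f (S k)).
Proof. induction m; simpl; [ring|]. simpl in IHm. rewrite IHm. ring. Qed.

Lemma rsum_nonneg m f : (forall k, (1 <= k <= m)%nat -> 0 <= f k) -> 0 <= rsum_up m f.
Proof. intros H. rewrite <- (Rmult_0_r (INR m)), <- rsum_const. apply rsum_le; auto. Qed.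

Lemma rsum_pos m f : (1 <= m)%nat -> (forall k, (1 <= k <= m)%nat -> 0 < f k) -> 0 < rsum_up m f.
Proof. destruct m; [lia|]. intros _ H. simpl. assert (0 <= rsum_up m f).
 apply rsum_nonneg; intros; left; apply H; lia. assert (0 < f (S m)) by (apply H; lia). lra. Qed.

Lemma is_derive_rsum m (F : nat -> R -> R) (F' : nat -> R) x :
  (forall k, (1 <= k <= m)%nat -> is_derive (F k) x (F' k)) ->
  is_derive (fun y => rsum_up m (fun k => F k y)) x (rsum_up m F').
Proof. induction m; simpl; intros H.
 - apply (is_derive_const 0).
 - apply (is_derive_plus (fun y => rsum_up m (fun k => F k y)) (F (S m))).
   apply IHm; intros; apply H; lia. apply H; lia. Qed.

Lemma term_derive c p : c^2 < 1 ->
  is_derive (fun p => cos p * / sqrt (1 - c^2 * cos p ^2)) p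
    (- sin p * / (sqrt (1 - c^2 * cos p ^2))^3).
Proof. intros Hc.
 assert (Hu : 0 < 1 - c^2 * cos p ^2).
 { assert (0 <= cos p ^2 <= 1). { split. nra. assert (H:=COS_bound p). nra. }
   assert (0 <= c^2) by nra. nra. }
 assert (Hs := sqrt_lt_R0 _ Hu).
 assert (Hss := sqrt_sqrt _ (Rlt_le _ _ Hu)).
 auto_derive.
 - replace (1 + - (c * (c * 1) * (cos p * (cos p * 1)))) with (1 - c^2 * cos p^2) by ring.
   repeat split; auto. apply Rgt_not_eq; lra.
 - replace (1 + - (c * (c * 1) * (cos p * (cos p * 1)))) with (1 - c^2 * cos p^2) by ring.
   set (r := sqrt (1 - c^2 * cos p ^2)) in *.
   transitivity (- sin p / r^3 * (r*r + c^2 * cos p^2)). field. lra.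
   rewrite Hss. field. lra.
Qed.

Lemma frac_lt1 a d : 0 < d -> a < d -> a / d < 1.
Proof. intros. apply (Rmult_lt_reg_r d); auto. field_simplify; lra. Qed.
Lemma frac_pos a d : 0 < d -> 0 < a -> 0 < a / d.
Proof. intros. unfold Rdiv. apply Rmult_lt_0_compat; auto. apply Rinv_0_lt_compat; auto. Qed.

Lemma sin_pos_frac a : 0 < a < 1 -> 0 < sin (PI * a).
Proof. intros. assert (Hp := PI_RGT_0). apply sin_gt_0; nra. Qed.

Lemma c_sq_lt1 n k : (1 <= k <= n)%nat -> c_ n k ^2 < 1.
Proof. intros Hk. unfold c_.
 assert (Hk1 : 1 <= INR k) by (apply (le_INR 1); lia).
 assert (Hkn : INR k <= INR n) by (apply le_INR; lia).
 set (a := (2 * INR k - 1) / (2 * INR n)).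
 assert (Ha : 0 < a < 1). { unfold a; split. apply frac_pos; lra. apply frac_lt1; lra. }
 replace (PI * (2 * INR k - 1) / (2 * INR n)) with (PI * a) by (unfold a, Rdiv; ring).
 assert (H := sin_pos_frac a Ha). assert (H2 := sin2_cos2 (PI * a)). unfold Rsqr in H2. nra. Qed.

Lemma u_pos n k phi : (1 <= k <= n)%nat -> 0 < 1 - c_ n k ^2 * cos phi ^2.
Proof. intros Hk. assert (H := c_sq_lt1 n k Hk).
 assert (0 <= cos phi ^2 <= 1). { split. nra. assert (H1:=COS_bound phi). nra. }
 assert (0 <= c_ n k ^2) by nra. nra. Qed.

Lemma sigma_pos n k phi : (1 <= k <= n)%nat -> 0 < sigma_ n k phi.
Proof. intros; apply sqrt_lt_R0, u_pos; auto. Qed.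

Lemma sigma_sq n k phi : (1 <= k <= n)%nat -> sigma_ n k phi * sigma_ n k phi = 1 - c_ n k ^2 * cos phi ^2.
Proof. intros; apply sqrt_sqrt; left; apply u_pos; auto. Qed.

Lemma tele a m : 2 * sin a * rsum_up m (fun k => cos ((2*INR k - 1)*a)) = sin (2*INR m*a).
Proof. induction m. simpl. replace (2*0*a) with 0 by ring. rewrite sin_0; ring.
 cbn [rsum_up]. rewrite Rmult_plus_distr_l, IHm, S_INR.
 set (x := (2 * INR m + 1) * a).
 replace (2 * INR m * a) with (x - a) by (unfold x; ring).
 replace (2 * (INR m + 1) * a) with (x + a) by (unfold x; ring).
 replace ((2 * (INR m + 1) - 1) * a) with x by (unfold x; ring).
 rewrite sin_plus, sin_minus. ring. Qed.

Lemma sum_c2 n : (2 <= n)%nat -> rsum_up n (fun k => c_ n k ^2) = INR n / 2.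
Proof. intros Hn.
 assert (Hn0 : 2 <= INR n) by (apply (le_INR 2); lia).
 set (a := PI / INR n).
 assert (E : rsum_up n (fun k => c_ n k ^2) = rsum_up n (fun k => / 2 + / 2 * cos ((2*INR k - 1)*a))).
 { apply rsum_ext. intros k _. unfold c_.
   replace ((2 * INR k - 1) * a) with (2 * (PI * (2 * INR k - 1) / (2 * INR n))) by (unfold a; field; lra).
   rewrite cos_2a_cos. field. }
 rewrite E, rsum_plus, rsum_const, rsum_scal.
 assert (Hs : 0 < sin a). { unfold a. replace (PI / INR n) with (PI * (1 / INR n)) by (field; lra).
   apply sin_pos_frac. split. apply frac_pos; lra. apply frac_lt1; lra. }
 assert (H := tele a n).
 replace (2 * INR n * a) with (2 * PI) in H by (unfold a; field; lra).
 rewrite sin_2PI in H.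
 assert (rsum_up n (fun k => cos ((2 * INR k - 1) * a)) = 0).
 { apply (Rmult_eq_reg_l (2 * sin a)). lra. lra. }
 rewrite H0. field. Qed.

Lemma W_eq n phi : W_ n phi = S_ n / 4 + / 4 * rsum_up n (fun k => cos phi * / sigma_ n k phi).
Proof. unfold W_, sum1. rewrite rsum_scal. field. Qed.

Lemma W_derive n phi :
  is_derive (W_ n) phi (/4 * rsum_up n (fun k => - sin phi * / sigma_ n k phi ^3)).
Proof.
 apply is_derive_ext with (fun p => S_ n / 4 + / 4 * rsum_up n (fun k => cos p * / sigma_ n k p)).
 { intros; symmetry; apply W_eq. }
 assert (H : is_derive (fun p => S_ n / 4 + / 4 * rsum_up n (fun k => cos p * / sigma_ n k p)) phi
   (0 + /4 * rsum_up n (fun k => - sin phi * / sigma_ n k phi ^3))).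
 { apply (is_derive_plus (fun _ => S_ n / 4)). apply (is_derive_const (S_ n / 4)).
   apply (is_derive_scal (fun p => rsum_up n (fun k => cos p * / sigma_ n k p))).
   apply (is_derive_rsum n (fun k p => cos p * / sigma_ n k p)).
   intros k Hk. unfold sigma_. apply term_derive. apply c_sq_lt1; auto. }
 rewrite Rplus_0_l in H. exact H. Qed.

Lemma Derive_W n phi : Derive (W_ n) phi = /4 * rsum_up n (fun k => - sin phi * / sigma_ n k phi ^3).
Proof. apply is_derive_unique, W_derive. Qed.

Lemma inv_sin_ge1 n k : (1 <= k <= n - 1)%nat -> 1 <= / sin (l_ n k).
Proof. intros Hk.
 assert (Hk1 : 1 <= INR k) by (apply (le_INR 1); lia).
 assert (Hkn : INR k + 1 <= INR n) by (rewrite <- S_INR; apply le_INR; lia).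
 assert (Hs : 0 < sin (l_ n k)).
 { unfold l_. replace (PI * INR k / INR n) with (PI * (INR k / INR n)) by (unfold Rdiv; ring).
   apply sin_pos_frac. split. apply frac_pos; lra. apply frac_lt1; lra. }
 assert (H1 := SIN_bound (l_ n k)).
 rewrite <- Rinv_1. apply Rinv_le_contravar; lra. Qed.

Lemma S_pos n : (2 <= n)%nat -> 0 < S_ n.
Proof. intros. unfold S_, sum1. apply rsum_pos. lia. intros k Hk.
 assert (H1 := inv_sin_ge1 n k Hk). lra. Qed.

Lemma inv_sin_small n j : (1 <= j)%nat -> (2 * j < n)%nat ->
  INR n / (INR j * PI) <= / sin (l_ n j) /\ / sin (l_ n (n - j)) = / sin (l_ n j).
Proof. intros Hj Hjn.
 assert (Hj1 : 1 <= INR j) by (apply (le_INR 1); lia).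
 assert (Hjn' : 2 * INR j + 1 <= INR n).
 { replace (2 * INR j + 1) with (INR (S (2*j))) by (rewrite S_INR, mult_INR; simpl; ring).
   apply le_INR; lia. }
 assert (Hp := PI_RGT_0).
 assert (Hs : 0 < sin (l_ n j)).
 { unfold l_. replace (PI * INR j / INR n) with (PI * (INR j / INR n)) by (unfold Rdiv; ring).
   apply sin_pos_frac. split. apply frac_pos; lra. apply frac_lt1; lra. }
 split.
 - assert (Hl : 0 < l_ n j) by (unfold l_; apply frac_pos; nra).
   assert (H := sin_lt_x _ Hl).
   replace (INR n / (INR j * PI)) with (/ l_ n j) by (unfold l_; field; lra).
   apply Rinv_le_contravar; lra.
 - unfold l_. rewrite minus_INR by lia.
   replace (PI * (INR n - INR j) / INR n) with (PI - PI * INR j / INR n) by (field; lra).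
   rewrite sin_PI_x. reflexivity. Qed.

Lemma S_lower n : (10 <= n)%nat -> 5 * INR n / 4 <= S_ n.
Proof. intros Hn.
 assert (Hn0 : 10 <= INR n) by (pose proof (le_INR 10 n ltac:(lia)) as HH; simpl in HH; lra).
 set (f := fun k => / sin (l_ n k)).
 assert (E : S_ n = f 1%nat + f 2%nat + rsum_up (n-5) (fun k => f (S (S k))) + f (n-2)%nat + f (n-1)%nat).
 { unfold S_, sum1. fold f.
   replace (n - 1)%nat with (S (S (S (S (n-5))))) by lia.
   rewrite rsum_shift, rsum_shift.
   replace (n-2)%nat with (S (S (S (n-5)))) by lia.
   cbn [rsum_up]. ring. }
 assert (Hm : INR (n-5) <= rsum_up (n-5) (fun k => f (S (S k)))).
 { rewrite <- (Rmult_1_r (INR (n-5))), <- rsum_const. apply rsum_le. intros k Hk.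
   apply inv_sin_ge1. lia. }
 destruct (inv_sin_small n 1 ltac:(lia) ltac:(lia)) as [A1 B1].
 destruct (inv_sin_small n 2 ltac:(lia) ltac:(lia)) as [A2 B2].
 assert (F1 : f (n-1)%nat = f 1%nat) by exact B1.
 assert (F2 : f (n-2)%nat = f 2%nat) by exact B2.
 rewrite E, F1, F2.
 assert (Hp := PI_4). assert (Hp0 := PI_RGT_0).
 rewrite minus_INR in Hm by lia.
 assert (G1 : INR n / 4 <= f 1%nat).
 { eapply Rle_trans; [|exact A1]. simpl INR. apply Rmult_le_compat_l. lra.
   apply Rinv_le_contravar; lra. }
 assert (G2 : INR n / 8 <= f 2%nat).
 { eapply Rle_trans; [|exact A2]. simpl INR. apply Rmult_le_compat_l. lra.
   apply Rinv_le_contravar; lra. }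
 simpl INR in Hm. lra. Qed.

Lemma r1 v : 0 <= v <= 1/2 -> 0 <= 5 - 5*v - 25*v^2 + 40*v^3 - 16*v^4.
Proof. intros. assert (0 <= v*(5-4*v) <= 3/2) by nra.
 replace (5 - 5*v - 25*v^2 + 40*v^3 - 16*v^4) with (5*(1-v) - (v*(5-4*v))^2) by ring. nra. Qed.
Lemma p1 v : 0 <= v <= 1/2 -> 1 <= (1 + 4 * v)^2 * (1-v)^3.
Proof. intros. assert (H0 := r1 v H).
 assert ((1 + 4 * v)^2 * (1-v)^3 - 1 = v * (5 - 5*v - 25*v^2 + 40*v^3 - 16*v^4)) by ring. nra. Qed.
Lemma q x : 0 < x -> x <= 7072/10000 -> 0 <= 8/5 - 59/25 * x + 4 * x^5.
Proof. intros. destruct (Rle_lt_dec x (6/10)).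
 - assert (0 <= x^5) by (apply pow_le; lra). nra.
 - assert ((6/10)^5 <= x^5) by (apply pow_incr; lra). nra. Qed.
Lemma p2 x s : 0 < x -> x^2 <= 1/2 -> 0 < s -> s^2 + x^2 = 1 -> s * (1 + 2 * x^2) <= 1 + 4/5 * x.
Proof. intros. assert (x <= 7072/10000) by nra. assert (Hq := q x H H3).
 assert ((s * (1 + 2 * x^2))^2 <= (1 + 4/5*x)^2). 
 { replace ((s * (1 + 2 * x^2))^2) with ((1-x^2)*(1+2*x^2)^2) by (replace (1-x^2) with (s^2) by lra; ring).
   assert ((1 + 4/5*x)^2 - (1-x^2)*(1+2*x^2)^2 = x * (8/5 - 59/25 * x + 4 * x^5)) by field.
   assert (0 <= x * (8/5 - 59/25 * x + 4 * x^5)) by (apply Rmult_le_pos; lra). lra. }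
 nra. Qed.

Lemma inv_cube_bound sg v : 0 < sg -> sg * sg = 1 - v -> 0 <= v <= 1/2 -> / sg ^3 <= 1 + 4 * v.
Proof. intros Hs Hsq Hv.
 assert (H1 := p1 v Hv).
 assert (Hc : 0 < sg^3) by (apply pow_lt; lra).
 assert (E : ((1 + 4*v) * sg^3)^2 = (1 + 4 * v)^2 * (1-v)^3) by (rewrite <- Hsq; ring).
 assert (Hy0 : 0 < (1 + 4*v) * sg^3) by (apply Rmult_lt_0_compat; lra).
 assert (Hy : 1 <= (1 + 4*v) * sg^3).
 { set (y := (1 + 4*v) * sg^3) in *. rewrite <- E in H1. nra. }
 replace (1 + 4*v) with (/ sg^3 * ((1 + 4*v) * sg^3)) by (field; lra).
 rewrite <- (Rmult_1_r (/ sg^3)) at 1. apply Rmult_le_compat_l; [left; apply Rinv_0_lt_compat; lra|lra]. Qed.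

Theorem lemma5p4 (n : nat) (hn : (2 <= n)%nat) :
  (forall phi, 0 <= phi < PI / 2 ->
     ex_derive (W_ n) phi /\ Derive (W_ n) phi / W_ n phi <= 0) /\
  ((10 <= n)%nat ->
     W_ n (PI / 2) = S_ n / 4 /\
     forall phi, PI / 4 <= phi < PI / 2 ->
       ex_derive (W_ n) phi /\ Rabs (Derive (W_ n) phi / W_ n phi) <= 4 / 5).
Proof.
 assert (HS := S_pos n hn).
 assert (Hp := PI_RGT_0).
 assert (Key : forall phi, 0 <= phi < PI / 2 ->
   Derive (W_ n) phi = - (sin phi / 4) * rsum_up n (fun k => / sigma_ n k phi ^3) /\
   W_ n phi = (S_ n + cos phi * rsum_up n (fun k => / sigma_ n k phi)) / 4 /\
   0 <= sin phi /\ 0 < cos phi /\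
   0 < rsum_up n (fun k => / sigma_ n k phi ^3) /\ 0 < rsum_up n (fun k => / sigma_ n k phi)).
 { intros phi Hphi. split; [|split; [|split; [|split; [|split]]]].
   - rewrite Derive_W, rsum_scal. field.
   - rewrite W_eq, rsum_scal. field.
   - apply sin_ge_0; lra.
   - apply cos_gt_0; lra.
   - apply rsum_pos. lia. intros k Hk. apply Rinv_0_lt_compat, pow_lt, sigma_pos; auto.
   - apply rsum_pos. lia. intros k Hk. apply Rinv_0_lt_compat, sigma_pos; auto. }
 split.
 - intros phi Hphi. split. eexists; apply W_derive.
   destruct (Key phi Hphi) as (D & W & Hs & Hc & HA & HB). rewrite D, W.
   assert (0 < (S_ n + cos phi * rsum_up n (fun k => / sigma_ n k phi)) / 4) by nra.
   unfold Rdiv at 1. apply Rmult_le_0_r. nra. left; apply Rinv_0_lt_compat; auto.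
 - intros H10. split.
   + unfold W_. rewrite cos_PI2. field.
   + intros phi Hphi. split. eexists; apply W_derive.
     assert (Hphi' : 0 <= phi < PI / 2) by lra.
     destruct (Key phi Hphi') as (D & W & Hs & Hc & HA & HB). rewrite D, W.
     set (A := rsum_up n (fun k => / sigma_ n k phi ^3)) in *.
     set (B := rsum_up n (fun k => / sigma_ n k phi)) in *.
     set (x := cos phi) in *. set (s := sin phi) in *.
     assert (Hx2 : x^2 <= 1/2).
     { assert (x <= cos (PI/4)) by (apply cos_decr_1; lra).
       rewrite cos_PI4 in H. assert (Hq := sqrt_sqrt 2 ltac:(lra)).
       assert (Hq0 : 0 < sqrt 2) by (apply sqrt_lt_R0; lra).
       assert (Hxq : x * sqrt 2 <= 1 / sqrt 2 * sqrt 2) by (apply Rmult_le_compat_r; lra).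
       replace (1 / sqrt 2 * sqrt 2) with 1 in Hxq by (field; lra).
       nra. }
     assert (Hs0 : 0 < s) by (apply sin_gt_0; unfold s; lra).
     assert (Hsx : s^2 + x^2 = 1) by (unfold s, x; rewrite <- (sin2_cos2 phi); unfold Rsqr; ring).
     assert (Hn0 : 10 <= INR n) by (pose proof (le_INR 10 n ltac:(lia)) as HH; simpl in HH; lra).
     assert (HSl := S_lower n H10).
     assert (HAb : A <= INR n * (1 + 2 * x^2)).
     { unfold A. eapply Rle_trans.
       apply (rsum_le n _ (fun k => 1 + 4 * x^2 * c_ n k ^2)).
       - intros k Hk. replace (4 * x^2 * c_ n k ^2) with (4 * (c_ n k ^2 * cos phi ^2)) by (unfold x; ring).
         apply inv_cube_bound. apply sigma_pos; auto. apply sigma_sq; auto.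
         assert (H1 := c_sq_lt1 n k Hk). split. nra. unfold x in Hx2. nra.
       - rewrite rsum_plus, rsum_const, rsum_scal, sum_c2 by lia. lra. }
     assert (HBb : INR n <= B).
     { unfold B. rewrite <- (Rmult_1_r (INR n)), <- rsum_const. apply rsum_le.
       intros k Hk. assert (H1 := sigma_pos n k phi Hk). assert (H2 := sigma_sq n k phi Hk).
       assert (0 <= c_ n k ^2 * cos phi ^2) by (apply Rmult_le_pos; apply pow2_ge_0).
       assert (sigma_ n k phi <= 1) by nra.
       rewrite <- Rinv_1. apply Rinv_le_contravar; lra. }
     assert (Hp2 := p2 x s Hc Hx2 Hs0 Hsx).
     assert (Hden : 0 < (S_ n + x * B) / 4) by nra.
     rewrite Rabs_left1.
     * apply (Rmult_le_reg_r ((S_ n + x * B) / 4)); auto.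
       replace (- (- (s / 4) * A / ((S_ n + x * B) / 4)) * ((S_ n + x * B) / 4)) with (s * A / 4) by (field; lra).
       assert (s * A <= s * (INR n * (1 + 2 * x^2))) by (apply Rmult_le_compat_l; lra).
       assert (x * INR n <= x * B) by (apply Rmult_le_compat_l; lra).
       nra.
     * unfold Rdiv at 1. apply Rmult_le_0_r. nra. left; apply Rinv_0_lt_compat; auto.
Qed.
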